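(* Let $d\ge 2$, let $P\subset\mathbb{R}^d$ be a generic convex simplicial $d$-dimensional polytope, and let $P'\subset\mathbb{R}^{d+1}$ be its lifting. Let $P_+$ be the intersection, over all facets $F$ of $P'$, of the closed upper half-spaces bounded by $\mathrm{aff}(F)$, and let $T_+$ be the intersection, over all facets $F$ of $P'$, of the closed upper half-spaces bounded by the hyperplane through the origin parallel to $\mathrm{aff}(F)$. Then for each facet of $T_+$ there is an unbounded facet of $P_+$ parallel to it.
   Context: $P$ is generic if no $d+2$ of its vertices lie on a common $(d-1)$-dimensional sphere and $P$ is not a $d$-simplex. With $V$ the vertex set of $P$ and $f(x_1,\dots,x_d)=(x_1,\dots,x_d,x_1^2+\dots+x_d^2)$, the lifting $P'$ is the convex hull of $f(V)$ in $\mathbb{R}^{d+1}$; it is a $(d+1)$-dimensional simplicial polytope none of whose facet hyperplanes is vertical (i.e. every facet normal has nonzero last coordinate). For a non-vertical hyperplane $H$ in $\mathbb{R}^{d+1}$, its closed upper half-space is the set of points lying on or above $H$ with respect to the last coordinate. *)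

(* Defs.v *)
From HB Require Import structures.
From mathcomp Require Import all_boot all_order all_algebra.
From mathcomp Require Import classical_sets reals.
Set Implicit Arguments. Unset Strict Implicit. Unset Printing Implicit Defensive.
Import Order.TTheory GRing.Theory Num.Theory.
Local Open Scope ring_scope.
Local Open Scope classical_set_scope.

Section Geom.
Variable R : realType.

Definition dotp (n : nat) (x y : 'rV[R]_n) : R := \sum_(i < n) x 0 i * y 0 i.

Definition aff (n : nat) (S : set 'rV[R]_n) : set 'rV[R]_n :=
  [set x | exists (k : nat) (p : 'I_k -> 'rV[R]_n) (w : 'I_k -> R),
     (forall i, S (p i)) /\ \sum_(i < k) w i = 1 /\ x = \sum_(i < k) w i *: p i].

Definition conv (n : nat) (S : set 'rV[R]_n) : set 'rV[R]_n :=
  [set x | exists (k : nat) (p : 'I_k -> 'rV[R]_n) (w : 'I_k -> R),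
     (forall i, S (p i)) /\ (forall i, 0 <= w i) /\
     \sum_(i < k) w i = 1 /\ x = \sum_(i < k) w i *: p i].

Definition aff_indep (n k : nat) (p : 'I_k -> 'rV[R]_n) : Prop :=
  forall w : 'I_k -> R, \sum_(i < k) w i = 0 -> \sum_(i < k) w i *: p i = 0 ->
    forall i, w i = 0.

Definition affdim (n : nat) (S : set 'rV[R]_n) (k : nat) : Prop :=
  (exists p : 'I_k.+1 -> 'rV[R]_n, (forall i, S (p i)) /\ aff_indep p) /\
  ~ (exists p : 'I_k.+2 -> 'rV[R]_n, (forall i, S (p i)) /\ aff_indep p).

Definition facet (n : nat) (K F : set 'rV[R]_n) : Prop :=
  (exists (a : 'rV[R]_n) (b : R), a != 0 /\
     (forall x, K x -> dotp a x <= b) /\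
     F = [set x | K x /\ dotp a x = b]) /\
  exists k : nat, affdim K k.+1 /\ affdim F k.

Definition bounded_set (n : nat) (S : set 'rV[R]_n) : Prop :=
  exists M : R, forall x, S x -> forall i, `|x 0 i| <= M.

Definition lin_part (n : nat) (A : set 'rV[R]_n) : set 'rV[R]_n :=
  [set v | exists y z, A y /\ A z /\ v = y - z].

(* closed upper half-space bounded by a (non-vertical) hyperplane H in
   R^(d+1): points lying on or above H w.r.t. the last coordinate *)
Definition upper_half (d : nat) (H : set 'rV[R]_(d + 1)) : set 'rV[R]_(d + 1) :=
  [set x | exists y, H y /\ lsubmx y = lsubmx x /\ rsubmx y 0 0 <= rsubmx x 0 0].

Definition liftmap (d : nat) (x : 'rV[R]_d) : 'rV[R]_(d + 1) :=
  row_mx x (\row_(i < 1) dotp x x).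

Definition is_vertex_set (d : nat) (V : seq 'rV[R]_d) : Prop :=
  uniq V /\
  (forall v, v \in V -> ~ conv [set w | w \in V /\ w != v] v) /\
  affdim (conv [set v | v \in V]) d.

Definition simplicial (d : nat) (V : seq 'rV[R]_d) : Prop :=
  forall F, facet (conv [set v | v \in V]) F ->
  forall (k : nat) (p : 'I_k -> 'rV[R]_d), injective p ->
    (forall i, p i \in V /\ F (p i)) -> aff_indep p.

(* generic: no d+2 vertices on a common (d-1)-sphere, and P not a d-simplex *)
Definition generic (d : nat) (V : seq 'rV[R]_d) : Prop :=
  (forall p : 'I_(d.+2) -> 'rV[R]_d, injective p -> (forall i, p i \in V) ->
     ~ exists (c : 'rV[R]_d) (r : R), 0 < r /\
         forall i, dotp (p i - c) (p i - c) = r ^+ 2) /\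
  size V != d.+1.

Definition lifting (d : nat) (V : seq 'rV[R]_d) : set 'rV[R]_(d + 1) :=
  conv [set y | exists v, v \in V /\ y = liftmap v].

Definition Pplus (d : nat) (V : seq 'rV[R]_d) : set 'rV[R]_(d + 1) :=
  [set x | forall F, facet (lifting V) F -> upper_half (aff F) x].

Definition Tplus (d : nat) (V : seq 'rV[R]_d) : set 'rV[R]_(d + 1) :=
  [set x | forall F, facet (lifting V) F -> upper_half (lin_part (aff F)) x].

End Geom.

(* Main.v *)
Require Import Defs.
From mathcomp Require Import all_boot all_order all_algebra.
From mathcomp Require Import classical_sets reals boolp.
From mathcomp Require Import ring lra.
Set Implicit Arguments. Unset Strict Implicit. Unset Printing Implicit Defensive.
Import Order.TTheory GRing.Theory Num.Theory.
Local Open Scope ring_scope.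
Local Open Scope classical_set_scope.


Lemma dotpE (R : realType) n (a x : 'rV[R]_n) : dotp a x = (a *m x^T) 0 0.
Proof. by rewrite /dotp mxE; apply: eq_bigr => i _; rewrite mxE. Qed.

Lemma dotpC (R : realType) n (a x : 'rV[R]_n) : dotp a x = dotp x a.
Proof. by rewrite /dotp; apply: eq_bigr => i _; rewrite mulrC. Qed.

Lemma dotpDr (R : realType) n (a x y : 'rV[R]_n) : dotp a (x + y) = dotp a x + dotp a y.
Proof. by rewrite /dotp -big_split; apply: eq_bigr => i _; rewrite mxE mulrDr. Qed.

Lemma dotpZr (R : realType) n (a x : 'rV[R]_n) c : dotp a (c *: x) = c * dotp a x.
Proof. by rewrite /dotp mulr_sumr; apply: eq_bigr => i _; rewrite mxE mulrCA. Qed.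

Lemma dotpNr (R : realType) n (a x : 'rV[R]_n) : dotp a (- x) = - dotp a x.
Proof. by rewrite -scaleN1r dotpZr mulN1r. Qed.

Lemma dotpBr (R : realType) n (a x y : 'rV[R]_n) : dotp a (x - y) = dotp a x - dotp a y.
Proof. by rewrite dotpDr dotpNr. Qed.

Lemma dotp0r (R : realType) n (a : 'rV[R]_n) : dotp a 0 = 0.
Proof. by rewrite /dotp big1 // => i _; rewrite mxE mulr0. Qed.

Lemma dotp_sumr (R : realType) n (a : 'rV[R]_n) k (f : 'I_k -> 'rV[R]_n) :
  dotp a (\sum_(i < k) f i) = \sum_(i < k) dotp a (f i).
Proof.
rewrite /dotp exchange_big /=; apply: eq_bigr => j _.
by rewrite summxE mulr_sumr.
Qed.

Lemma dotp_comb (R : realType) n (a : 'rV[R]_n) k (w : 'I_k -> R) (f : 'I_k -> 'rV[R]_n) :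
  dotp a (\sum_(i < k) w i *: f i) = \sum_(i < k) w i * dotp a (f i).
Proof. by rewrite dotp_sumr; apply: eq_bigr => i _; rewrite dotpZr. Qed.

Lemma dotpDl (R : realType) n (a b x : 'rV[R]_n) : dotp (a + b) x = dotp a x + dotp b x.
Proof. by rewrite dotpC dotpDr !(dotpC x). Qed.

Lemma dotpZl (R : realType) n (a x : 'rV[R]_n) c : dotp (c *: a) x = c * dotp a x.
Proof. by rewrite dotpC dotpZr dotpC. Qed.

Lemma dotpBl (R : realType) n (a b x : 'rV[R]_n) : dotp (a - b) x = dotp a x - dotp b x.
Proof. by rewrite dotpC dotpBr !(dotpC x). Qed.

Lemma dotp_ge0 (R : realType) n (x : 'rV[R]_n) : 0 <= dotp x x.
Proof. by apply: sumr_ge0 => i _; rewrite -expr2 sqr_ge0. Qed.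

Lemma dotp_eq0 (R : realType) n (x : 'rV[R]_n) : dotp x x = 0 -> x = 0.
Proof.
move=> /eqP; rewrite /dotp psumr_eq0 => [/allP H|i _]; last by rewrite -expr2 sqr_ge0.
apply/rowP => j; rewrite mxE; have := H j (mem_index_enum j).
by rewrite implyTb mulf_eq0 orbb => /eqP.
Qed.

Lemma dotp_gt0 (R : realType) n (x : 'rV[R]_n) : x != 0 -> 0 < dotp x x.
Proof.
move=> nz; rewrite lt_def dotp_ge0 andbT; apply/eqP => /dotp_eq0 h.
by rewrite h eqxx in nz.
Qed.

Lemma perp_parallel (R : realType) n (a N : 'rV[R]_n) : a != 0 ->
  (forall v, dotp a v = 0 -> dotp N v = 0) -> N = (dotp N a / dotp a a) *: a.
Proof.
move=> a0 H; set l := dotp N a / dotp a a.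
have aa : dotp a a != 0 by rewrite gt_eqF // dotp_gt0.
have h1 : dotp a (N - l *: a) = 0.
  by rewrite dotpBr dotpZr (dotpC a N) /l -mulrA mulVf // mulr1 subrr.
have h2 := H _ h1.
apply/eqP; rewrite -subr_eq0; apply/eqP/dotp_eq0.
by rewrite dotpBl h2 sub0r dotpZl h1 mulr0 oppr0.
Qed.


Lemma submxB (R : realType) m1 m2 n (A B : 'M[R]_(m1, n)) (C : 'M[R]_(m2, n)) :
  (A <= C)%MS -> (B <= C)%MS -> (A - B <= C)%MS.
Proof. by move=> sA sB; rewrite addmx_sub // -scaleN1r scalemx_sub. Qed.

Definition diffmx (R : realType) n j (q : 'I_j.+1 -> 'rV[R]_n) : 'M[R]_(j, n) :=
  \matrix_(i < j) (q (lift ord0 i) - q ord0).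

Lemma diffmx_mul (R : realType) n j (q : 'I_j.+1 -> 'rV[R]_n) (u : 'rV[R]_j) :
  u *m diffmx q = \sum_(i < j) u 0 i *: q (lift ord0 i) - (\sum_(i < j) u 0 i) *: q ord0.
Proof.
rewrite mulmx_sum_row scaler_suml -sumrB; apply: eq_bigr => i _.
by rewrite rowK scalerBr.
Qed.

Lemma affindep_rowfree (R : realType) n j (q : 'I_j.+1 -> 'rV[R]_n) :
  aff_indep q <-> row_free (diffmx q).
Proof.
split.
- move=> H; rewrite -kermx_eq0; apply/eqP/row_matrixP => r; rewrite row0.
  set u := row r (kermx (diffmx q)).
  have uD : u *m diffmx q = 0 by rewrite /u -row_mul mulmx_ker row0.
  pose w : 'I_j.+1 -> R := fun l => if unlift ord0 l is Some i then u 0 i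
                                   else - \sum_(i < j) u 0 i.
  have wl (i : 'I_j) : w (lift ord0 i) = u 0 i by rewrite /w liftK.
  have w0 : w ord0 = - \sum_(i < j) u 0 i by rewrite /w unlift_none.
  have ws : \sum_(l < j.+1) w l = 0.
    rewrite big_ord_recl w0.
    rewrite (eq_bigr _ (fun i _ => wl i)).
    by rewrite addNr.
  have wq : \sum_(l < j.+1) w l *: q l = 0.
    rewrite big_ord_recl w0.
    rewrite (eq_bigr (fun i => u 0 i *: q (lift ord0 i))); last by move=> i _; rewrite wl.
    by rewrite addrC scaleNr -diffmx_mul.
  apply/rowP => i; have := H w ws wq (lift ord0 i); rewrite wl => ->.
  by rewrite mxE.
- move=> rf w ws wq l.
  pose u : 'rV[R]_j := \row_i w (lift ord0 i).
  have ws' : \sum_(i < j) w (lift ord0 i) = - w ord0.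
    by move: ws; rewrite big_ord_recl => /eqP; rewrite addrC addr_eq0 => /eqP.
  have uD : u *m diffmx q = 0 *m diffmx q.
    rewrite mul0mx diffmx_mul.
    under eq_bigr do rewrite mxE.
    under [\sum_(i < j) u 0 i]eq_bigr do rewrite mxE.
    rewrite ws' scaleNr opprK.
    by move: wq; rewrite big_ord_recl addrC.
  have u0 := row_free_inj rf uD.
  case: (unliftP ord0 l) => [i ->|->].
    by have := congr1 (fun M : 'rV[R]_j => M 0 i) u0; rewrite !mxE.
  apply/eqP; rewrite -oppr_eq0 -ws'; apply/eqP; apply: big1 => i _.
  by have := congr1 (fun M : 'rV[R]_j => M 0 i) u0; rewrite !mxE.
Qed.

Lemma affindep_rank_diff (R : realType) n j (q : 'I_j.+1 -> 'rV[R]_n) :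
  aff_indep q -> \rank (diffmx q) = j.
Proof. by move/affindep_rowfree/eqP. Qed.

Lemma affindep_rank (R : realType) n m (q : 'I_m -> 'rV[R]_n) (o : 'rV[R]_n) r
   (B : 'M[R]_(r, n)) :
  aff_indep q -> (forall i, (q i - o <= B)%MS) -> (m <= (\rank B).+1)%N.
Proof.
case: m q => [//|j] q H sub.
rewrite ltnS -(affindep_rank_diff H); apply: mxrankS; apply/row_subP => i.
rewrite rowK.
have -> : q (lift ord0 i) - q ord0 = (q (lift ord0 i) - o) - (q ord0 - o).
  by rewrite opprB addrA subrK.
by apply: submxB.
Qed.

Lemma affindep_bound (R : realType) n m (q : 'I_m -> 'rV[R]_n) :
  aff_indep q -> (m <= n.+1)%N.
Proof.
move=> H; have := affindep_rank (o := 0) (B := 1%:M : 'M[R]_n) H.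
by rewrite mxrank1; apply=> i; rewrite submx1.
Qed.

Lemma dotp_mx (R : realType) n (a x : 'rV[R]_n) : (x *m a^T = 0) <-> dotp a x = 0.
Proof.
rewrite dotpC dotpE; split => [->|h]; first by rewrite mxE.
by apply/rowP => i; rewrite ord1 h mxE.
Qed.

Lemma rank_ker_tr (R : realType) n (a : 'rV[R]_n) : a != 0 ->
  \rank (kermx a^T) = n.-1.
Proof.
move=> a0; rewrite mxrank_ker mxrank_tr.
have : \rank a = 1%N.
  apply/eqP; rewrite eqn_leq rank_leq_row lt0n mxrank_eq0 a0 //.
by move->; rewrite subn1.
Qed.

Lemma affindep_hyper (R : realType) n m (q : 'I_m -> 'rV[R]_n) (a : 'rV[R]_n) b :
  a != 0 -> aff_indep q -> (forall i, dotp a (q i) = b) -> (m <= n)%N.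
Proof.
case: m q => [//|j] q a0 H hq.
have := affindep_rank (o := q ord0) (B := kermx a^T) H.
rewrite rank_ker_tr //.
have n0 : (0 < n)%N.
  case: n a q a0 {H hq} => // a q; rewrite (_ : a = 0) ?eqxx //.
  by apply/rowP => -[].
rewrite prednK //; apply => i; apply/sub_kermxP/dotp_mx.
by rewrite dotpBr !hq subrr.
Qed.

Lemma affindep_span (R : realType) n j (q : 'I_j.+1 -> 'rV[R]_n) (a : 'rV[R]_n) b :
  a != 0 -> aff_indep q -> (forall i, dotp a (q i) = b) -> j.+1 = n ->
  forall y, dotp a y = b -> exists w : 'I_j.+1 -> R,
      \sum_(i < j.+1) w i = 1 /\ y = \sum_(i < j.+1) w i *: q i.
Proof.
move=> a0 H hq jn y hy.
have sD : (diffmx q <= kermx a^T)%MS.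
  apply/row_subP => i; rewrite rowK; apply/sub_kermxP/dotp_mx.
  by rewrite dotpBr !hq subrr.
have eqD : (diffmx q == kermx a^T)%MS.
  rewrite -(mxrank_leqif_eq sD) affindep_rank_diff // rank_ker_tr // -jn //.
have : (y - q ord0 <= diffmx q)%MS.
  move/eqmxP: eqD => ->; apply/sub_kermxP/dotp_mx.
  by rewrite dotpBr hy hq subrr.
case/submxP => c hc.
pose w : 'I_j.+1 -> R := fun l => if unlift ord0 l is Some i then c 0 i
                                   else 1 - \sum_(i < j) c 0 i.
have wl (i : 'I_j) : w (lift ord0 i) = c 0 i by rewrite /w liftK.
have w0 : w ord0 = 1 - \sum_(i < j) c 0 i by rewrite /w unlift_none.
exists w; split.
  rewrite big_ord_recl w0.
  rewrite (eq_bigr _ (fun i _ => wl i)).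
  by rewrite subrK.
rewrite big_ord_recl w0.
rewrite (eq_bigr (fun i => c 0 i *: q (lift ord0 i))); last by move=> i _; rewrite wl.
move: hc; rewrite diffmx_mul => /eqP; rewrite subr_eq => /eqP ->.
by rewrite scalerBl scale1r addrAC [RHS]addrC addrA.
Qed.


Lemma sum_restrict (V : zmodType) m m' (h : (m' <= m)%N) (F : 'I_m -> V) :
  (forall l : 'I_m, ~~ (l < m')%N -> F l = 0) ->
  \sum_(l < m) F l = \sum_(i < m') F (widen_ord h i).
Proof.
move=> F0.
have -> : \sum_(l < m) F l = \sum_(l < m | true && (l < m')%N) F l.
  rewrite [RHS]big_mkcond; apply: eq_bigr => l _ /=.
  by case: ifP => // /negbT /F0.
by rewrite big_ord_narrow_cond.
Qed.

Lemma affindep_restrict (R : realType) n m (q : 'I_m -> 'rV[R]_n) m' (h : (m' <= m)%N) :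
  aff_indep q -> aff_indep (fun i : 'I_m' => q (widen_ord h i)).
Proof.
move=> H w ws wq i.
pose W : 'I_m -> R := fun l => if insub (val l) is Some i then w i else 0.
have Ww (i0 : 'I_m') : W (widen_ord h i0) = w i0 by rewrite /W /= valK.
have W0 (l : 'I_m) : ~~ (l < m')%N -> W l = 0 by move=> nl; rewrite /W insubF //; apply/negbTE.
have := H W; rewrite -Ww; apply.
  rewrite (sum_restrict h W0) -[X in _ = X]ws; apply: eq_bigr => i0 _; by rewrite Ww.
rewrite (sum_restrict h); last by move=> l nl; rewrite W0 // scale0r.
by rewrite -[X in _ = X]wq; apply: eq_bigr => i0 _; rewrite Ww.
Qed.

Lemma affindep_trans (R : realType) n m (q : 'I_m -> 'rV[R]_n) x :
  aff_indep q -> aff_indep (fun i => x + q i).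
Proof.
move=> H w ws wq; apply: H => //.
move: wq; under eq_bigr do rewrite scalerDr.
by rewrite big_split /= -scaler_suml ws scale0r add0r.
Qed.

Lemma sum_delta (V : zmodType) m (i : 'I_m) (f : 'I_m -> V) :
  \sum_(l < m) (if l == i then f l else 0) = f i.
Proof. by rewrite -big_mkcond big_pred1_eq. Qed.

Lemma affindep_inj (R : realType) n m (q : 'I_m -> 'rV[R]_n) :
  aff_indep q -> injective q.
Proof.
move=> H i j qij; apply/eqP/negPn/negP => nij.
pose w : 'I_m -> R := fun l => (l == i)%:R - (l == j)%:R.
have hw : w i = 1 by rewrite /w eqxx (negbTE nij) subr0.
suff : w i = 0 by rewrite hw => /eqP; rewrite oner_eq0.
apply: H.
  rewrite sumrB.
  rewrite (eq_bigr (fun l => if l == i then 1 else 0)); last by move=> l _; case: (l == i).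
  rewrite [X in _ - X](eq_bigr (fun l => if l == j then 1 else 0)); last by move=> l _; case: (l == j).
  by rewrite !sum_delta subrr.
under eq_bigr do rewrite scalerBl.
rewrite sumrB.
rewrite (eq_bigr (fun l => if l == i then q l else 0)); last first.
  by move=> l _; case: (l == i); rewrite ?scale1r ?scale0r.
rewrite [X in _ - X](eq_bigr (fun l => if l == j then q l else 0)); last first.
  by move=> l _; case: (l == j); rewrite ?scale1r ?scale0r.
by rewrite !sum_delta qij subrr.
Qed.

Definition ext (T : Type) k (q : 'I_k -> T) (u : T) : 'I_k.+1 -> T :=
  fun i => if unlift ord_max i is Some j then q j else u.

Lemma ext_widen (T : Type) k (q : 'I_k -> T) u (i : 'I_k) :
  ext q u (widen_ord (leqnSn k) i) = q i.
Proof.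
have -> : widen_ord (leqnSn k) i = lift ord_max i by apply: val_inj; exact: (esym (lift_max i)).
by rewrite /ext liftK.
Qed.

Lemma ext_max (T : Type) k (q : 'I_k -> T) u : ext q u ord_max = u.
Proof. by rewrite /ext unlift_none. Qed.

Lemma affindep_ext (R : realType) n k (q : 'I_k -> 'rV[R]_n) (N : 'rV[R]_n) b u :
  aff_indep q -> (forall i, dotp N (q i) = b) -> dotp N u != b ->
  aff_indep (ext q u).
Proof.
move=> H hq hu w ws wq.
move: ws wq; rewrite !big_ord_recr ext_max.
rewrite (eq_bigr (fun i => w (widen_ord (leqnSn k) i) *: q i)); last first.
  by move=> i _; rewrite ext_widen.
move=> ws wq.
have W0 : w ord_max = 0.
  have := congr1 (dotp N) wq; rewrite dotp0r dotpDr dotpZr dotp_comb.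
  under eq_bigr do rewrite hq.
  rewrite -mulr_suml.
  have -> : \sum_(i < k) w (widen_ord (leqnSn k) i) = - w ord_max.
    by apply/eqP; rewrite -addr_eq0 ws.
  rewrite mulNr addrC -mulrBr => /eqP; rewrite mulf_eq0 subr_eq0 (negbTE hu) orbF.
  by move/eqP.
move: ws wq; rewrite W0 scale0r /= !addr0 => ws wq i.
case: (unliftP ord_max i) => [j ->|-> //].
have -> : lift ord_max j = widen_ord (leqnSn k) j by apply: val_inj; exact: (lift_max j).
by apply: (H (fun j => w (widen_ord (leqnSn k) j))).
Qed.

Lemma affindep_extract (R : realType) n j (q : 'I_j.+1 -> 'rV[R]_n) m :
  (m <= (\rank (diffmx q)).+1)%N ->
  exists r : 'I_m -> 'rV[R]_n, aff_indep r /\ forall i, exists l, r i = q l.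
Proof.
move=> hm.
set D := diffmx q; pose f := maxrankfun D.
pose r0 : 'I_(\rank D).+1 -> 'rV[R]_n :=
  fun i => if unlift ord0 i is Some l then q (lift ord0 (f l)) else q ord0.
have Hr0 : aff_indep r0.
  apply/affindep_rowfree.
  have -> : diffmx r0 = rowsub f D.
    apply/matrixP => i k; rewrite /D /diffmx !mxE /r0 liftK unlift_none.
    by [].
  exact: (maxrowsub_free D).
exists (fun i : 'I_m => r0 (widen_ord hm i)); split; first exact: affindep_restrict.
move=> i; rewrite /r0; case: (unlift _ _) => [l|]; by eexists.
Qed.

Lemma conv_gen (R : realType) n (S : set 'rV[R]_n) x : S x -> conv S x.
Proof.
move=> Sx; exists 1%N, (fun _ => x), (fun _ => 1); split => //; split => // ; split.
  by rewrite big_ord1.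
by rewrite big_ord1 scale1r.
Qed.

Lemma conv_aff (R : realType) n (S : set 'rV[R]_n) x : conv S x -> aff S x.
Proof. by case=> k [p [w [Sp [_ [ws ->]]]]]; exists k, p, w. Qed.

Lemma aff_gen (R : realType) n (S : set 'rV[R]_n) x : S x -> aff S x.
Proof. by move/conv_gen/conv_aff. Qed.

Lemma conv_mono (R : realType) n (S S' : set 'rV[R]_n) x :
  (forall y, S y -> S' y) -> conv S x -> conv S' x.
Proof. by move=> sub [k [p [w [Sp H]]]]; exists k, p, w; split => // i; apply: sub. Qed.

Lemma aff_dotp (R : realType) n (S : set 'rV[R]_n) a b x :
  (forall y, S y -> dotp a y = b) -> aff S x -> dotp a x = b.
Proof.
move=> hS [k [p [w [Sp [ws ->]]]]]; rewrite dotp_comb.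
under eq_bigr do rewrite hS //.
by rewrite -mulr_suml ws mul1r.
Qed.

Lemma conv_dotp_le (R : realType) n (S : set 'rV[R]_n) a b x :
  (forall y, S y -> dotp a y <= b) -> conv S x -> dotp a x <= b.
Proof.
move=> hS [k [p [w [Sp [w0 [ws ->]]]]]]; rewrite dotp_comb.
apply: (@le_trans _ _ (\sum_(i < k) w i * b)).
  by apply: ler_sum => i _; apply: ler_wpM2l => //; apply: hS.
by rewrite -mulr_suml ws mul1r.
Qed.

Lemma aff_span_sub (R : realType) n (S : set 'rV[R]_n) o r (B : 'M[R]_(r, n)) x :
  (forall y, S y -> (y - o <= B)%MS) -> aff S x -> (x - o <= B)%MS.
Proof.
move=> hS [k [p [w [Sp [ws ->]]]]].
have -> : \sum_(i < k) w i *: p i - o = \sum_(i < k) w i *: (p i - o).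
  under [RHS]eq_bigr do rewrite scalerBr.
  by rewrite sumrB -scaler_suml ws scale1r.
by apply: summx_sub => i _; apply: scalemx_sub; apply: hS.
Qed.

Lemma diff_sub (R : realType) n j (q : 'I_j.+1 -> 'rV[R]_n) i :
  (q i - q ord0 <= diffmx q)%MS.
Proof.
case: (unliftP ord0 i) => [l ->|->]; last by rewrite subrr sub0mx.
by apply: (eq_row_sub l); rewrite rowK.
Qed.

Lemma dim_eq (R : realType) n (S : set 'rV[R]_n) k m (p : 'I_m -> 'rV[R]_n) :
  affdim S k.+1 -> aff_indep p -> (forall i, S (p i)) -> m = n.+1 -> k.+1 = n.
Proof.
move=> [[p1 [Sp1 H1]] nH] Hp Sp mn.
have b1 := affindep_bound H1.
apply/eqP; rewrite eqn_leq -ltnS b1 /=.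
rewrite leqNgt; apply/negP => lt.
apply: nH; have h : (k.+3 <= m)%N by rewrite mn.
exists (fun i => p (widen_ord h i)); split; first by move=> i; apply: Sp.
exact: affindep_restrict.
Qed.

Lemma linpart_aff (R : realType) n (S : set 'rV[R]_n) (a : 'rV[R]_n) b j
    (q : 'I_j.+1 -> 'rV[R]_n) :
  a != 0 -> (forall x, S x -> dotp a x = b) -> aff_indep q -> (forall i, S (q i)) ->
  j.+1 = n ->
  aff S = [set x | dotp a x = b] /\ lin_part (aff S) = [set v | dotp a v = 0].
Proof.
move=> a0 hS H Sq jn.
have affE : aff S = [set x | dotp a x = b].
  apply/seteqP; split => x /=; first by apply: aff_dotp.
  move=> hx; have [w [ws ->]] := affindep_span a0 H (fun i => hS _ (Sq i)) jn hx.
  by exists j.+1, q, w.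
split => //; apply/seteqP; split => v /=.
  by case=> y [z [Ay [Az ->]]]; move: Ay Az; rewrite affE /= dotpBr => -> ->; rewrite subrr.
move=> hv; exists (v + q ord0), (q ord0); rewrite affE /=; split.
  by rewrite dotpDr hv add0r hS.
by split; [rewrite hS | rewrite addrK].
Qed.

Lemma fin_bound (R : realType) (I : finType) (P : I -> Prop) (g h : I -> R) :
  (forall i, P i -> 0 < g i) -> exists t, 0 < t /\ forall i, P i -> h i <= t * g i.
Proof.
move=> hg.
suff [t [t0 Ht]] : exists t, 0 < t /\ forall i, i \in enum I -> P i -> h i <= t * g i.
  by exists t; split => // i; apply: Ht; rewrite mem_enum.
elim: (enum I) => [|x s [t [t0 Ht]]]; first by exists 1; split.
case: (pselect (P x)) => Px; last first.
  exists t; split => // i; rewrite inE => /orP[/eqP -> //|]; exact: Ht.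
have gx := hg _ Px.
exists (t + `|h x| / g x); split.
  by apply: ltr_wpDr => //; apply: divr_ge0 => //; apply: ltW.
move=> i; rewrite inE => /orP[/eqP -> _|iS Pi].
  rewrite mulrDl -mulrA mulVf ?gt_eqF // mulr1.
  apply: (le_trans (ler_norm _)); rewrite lerDr; apply: mulr_ge0; apply: ltW => //.
apply: (le_trans (Ht _ iS Pi)); apply: ler_wpM2r; first exact/ltW/hg.
by rewrite lerDl; apply: divr_ge0 => //; apply: ltW.
Qed.

Lemma fin_argmax (R : realType) (I : finType) (P : I -> Prop) (e : I -> R) i1 :
  P i1 -> exists i0, P i0 /\ forall i, P i -> e i <= e i0.
Proof.
move=> P1.
suff [i0 [P0 H]] : exists i0, P i0 /\ forall i, i \in enum I -> P i -> e i <= e i0.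
  by exists i0; split => // i; apply: H; rewrite mem_enum.
elim: (enum I) => [|x s [i0 [P0 H]]]; first by exists i1.
case: (pselect (P x)) => Px; last first.
  exists i0; split => // i; rewrite inE => /orP[/eqP -> //|]; exact: H.
case: (leP (e x) (e i0)) => hx.
  exists i0; split => // i; rewrite inE => /orP[/eqP -> //|]; exact: H.
exists x; split => // i; rewrite inE => /orP[/eqP -> //|iS Pi].
exact: (le_trans (H _ iS Pi) (ltW hx)).
Qed.


Lemma dotp_split (R : realType) d (a x : 'rV[R]_(d + 1)) :
  dotp a x = dotp (lsubmx a) (lsubmx x) + a 0 (rshift d ord0) * x 0 (rshift d ord0).
Proof.
rewrite /dotp big_split_ord big_ord1 /=; congr (_ + _).
by apply: eq_bigr => i _; rewrite !mxE.
Qed.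

Lemma uh_char (R : realType) d (N : 'rV[R]_(d + 1)) c x :
  N 0 (rshift d ord0) = -1 ->
  upper_half [set y | dotp N y = c] x <-> dotp N x <= c.
Proof.
move=> hN; split.
  case=> y [/= hy [hl hr]]; move: hy hr; rewrite !dotp_split hN hl !mxE => hy hr.
  lra.
move=> hx.
exists (row_mx (lsubmx x) (\row_(i < 1) (dotp (lsubmx N) (lsubmx x) - c))).
rewrite /= row_mxKl row_mxKr dotp_split row_mxKl hN row_mxEr !mxE.
split; first by lra.
split => //; move: hx; rewrite dotp_split hN; lra.
Qed.

Lemma lsubmx_lift (R : realType) d (v : 'rV[R]_d) : lsubmx (liftmap v) = v.
Proof. by rewrite /liftmap row_mxKl. Qed.

Lemma lift_last (R : realType) d (v : 'rV[R]_d) : liftmap v 0 (rshift d ord0) = dotp v v.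
Proof. by rewrite /liftmap row_mxEr mxE. Qed.

Lemma dotp_lift (R : realType) d (A : 'rV[R]_(d + 1)) v :
  dotp A (liftmap v) = dotp (lsubmx A) v + A 0 (rshift d ord0) * dotp v v.
Proof. by rewrite dotp_split lsubmx_lift lift_last. Qed.

Lemma dotp_sqB (R : realType) n (x c : 'rV[R]_n) :
  dotp (x - c) (x - c) = dotp x x - 2 * dotp c x + dotp c c.
Proof. rewrite dotpBl !dotpBr (dotpC x c); ring. Qed.

Lemma circum (R : realType) k (r : 'I_k.+1 -> 'rV[R]_k) :
  aff_indep r -> exists c, forall i,
    dotp (r i - c) (r i - c) = dotp (r ord0 - c) (r ord0 - c).
Proof.
move=> H; set D := diffmx r.
have uD : D^T \in unitmx by rewrite unitmx_tr -row_free_unit; apply/affindep_rowfree.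
pose beta : 'rV[R]_k := \row_i ((dotp (r (lift ord0 i)) (r (lift ord0 i)) - dotp (r ord0) (r ord0)) / 2).
exists (beta *m invmx D^T) => i.
have hc : (beta *m invmx D^T) *m D^T = beta by rewrite mulmxKV.
case: (unliftP ord0 i) => [l ->|-> //].
have e : dotp (beta *m invmx D^T) (r (lift ord0 l) - r ord0) = beta 0 l.
  rewrite -[RHS](congr1 (fun M : 'rV[R]_k => M 0 l) hc) /dotp mxE.
  by apply: eq_bigr => m _; rewrite !mxE.
move: e; rewrite mxE dotpBr !dotp_sqB => e.
have -> : dotp (beta *m invmx D^T) (r (lift ord0 l)) =
   dotp (beta *m invmx D^T) (r ord0) +
   (dotp (r (lift ord0 l)) (r (lift ord0 l)) - dotp (r ord0) (r ord0)) / 2 by rewrite -e; ring.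
by field.
Qed.

Lemma ext_inj (T : eqType) k (q : 'I_k -> T) u :
  injective q -> (forall i, q i != u) -> injective (ext q u).
Proof.
move=> qi qu i j; rewrite /ext.
case: (unliftP ord_max i) => [i' ->|->]; case: (unliftP ord_max j) => [j' ->|->];
  rewrite ?liftK ?unlift_none //.
- by move=> /qi ->.
- by move=> e; move: (qu i'); rewrite e eqxx.
- by move=> e; move: (qu j'); rewrite e eqxx.
Qed.


Lemma sum_recr (V : zmodType) k (F : 'I_k.+1 -> V) :
  \sum_(i < k.+1) F i = \sum_(i < k) F (widen_ord (leqnSn k) i) + F ord_max.
Proof. by rewrite big_ord_recr. Qed.

Lemma lift_max_widen k (j : 'I_k) : lift ord_max j = widen_ord (leqnSn k) j.
Proof. by apply: val_inj; exact: (lift_max j). Qed.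

Lemma sum3 (R : realType) k (m a b : 'I_k -> R) C :
  \sum_(i < k) m i * (a i - 2 * b i + C) =
  \sum_(i < k) m i * a i - 2 * \sum_(i < k) m i * b i + (\sum_(i < k) m i) * C.
Proof.
rewrite mulr_suml mulr_sumr -sumrB -big_split /=; apply: eq_bigr => i _; ring.
Qed.

Lemma vertices_rich (R : realType) d (V : seq 'rV[R]_d) :
  is_vertex_set V -> exists r : 'I_(d.+1) -> 'rV[R]_d, aff_indep r /\ forall i, r i \in V.
Proof.
case=> [uV [_ [[p0 [Cp0 H0]] _]]].
have Vne : (0 < size V)%N.
  case: (Cp0 ord0) => k [p [w [Sp [_ [ws _]]]]].
  case: k p w Sp ws => [|k] p w Sp ws.
    by move: ws; rewrite big_ord0 => /eqP; rewrite eq_sym oner_eq0.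
  by have := Sp ord0; case: (V).
set j := (size V).-1; have sj : size V = j.+1 by rewrite prednK.
pose qV : 'I_j.+1 -> 'rV[R]_d := fun i => nth 0 V i.
have memq : forall v, v \in V -> exists i, v = qV i.
  move=> v vV; have iv : (index v V < j.+1)%N by rewrite -sj index_mem.
  by exists (Ordinal iv); rewrite /qV /= nth_index.
have sub : forall y, [set v | v \in V] y -> (y - qV ord0 <= diffmx qV)%MS.
  by move=> y /memq [i ->]; apply: diff_sub.
have rk := affindep_rank H0 (fun i => aff_span_sub sub (conv_aff (Cp0 i))).
have [r [Hr Er]] := affindep_extract rk.
exists r; split => // i; case: (Er i) => l ->; rewrite /qV mem_nth // sj //.
Qed.

Lemma lifting_full (R : realType) d (V : seq 'rV[R]_d) :
  (1 <= d)%N -> is_vertex_set V -> generic V ->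
  exists p : 'I_(d.+2) -> 'rV[R]_(d + 1), aff_indep p /\ forall i, lifting V (p i).
Proof.
move=> d1 hV [gen sV].
have [r [Hr rV]] := vertices_rich hV.
have [uV _] := hV.
have ri := affindep_inj Hr.
set L := map r (enum 'I_(d.+1)).
have uL : uniq L by rewrite map_inj_uniq ?enum_uniq.
have sL : size L = d.+1 by rewrite size_map size_enum_ord.
have [vs [vsV vsr]] : exists vs, vs \in V /\ forall i, r i != vs.
  case: (boolP (all (fun v => v \in L) V)) => [/allP hall|].
    exfalso; move/eqP: sV; apply.
    apply/eqP; rewrite eqn_leq; apply/andP; split.
      by rewrite -sL; apply: uniq_leq_size.
    rewrite -sL; apply: uniq_leq_size => // x /mapP [i _ ->]; exact: rV.
  case/allPn => vs vsV vsL; exists vs; split => // i; apply/eqP => e.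
  by move: vsL; rewrite -e map_f // mem_enum.
have [c hc] := circum Hr.
pose pt := ext r vs.
have pti : injective pt := ext_inj ri vsr.
have ptV : forall i, pt i \in V.
  by move=> i; rewrite /pt /ext; case: (unlift _ _) => [l|] //.
exists (fun i => liftmap (pt i)); split; last first.
  by move=> i; apply: conv_gen; exists (pt i); split.
move=> w ws wq.
have low : \sum_(i < d.+2) w i *: pt i = 0.
  have := congr1 lsubmx wq; rewrite linear_sum linear0 => h; rewrite -[X in _ = X]h.
  by apply: eq_bigr => i _; rewrite linearZ /= lsubmx_lift.
have top : \sum_(i < d.+2) w i * dotp (pt i) (pt i) = 0.
  have := congr1 (fun M : 'rV[R]_(d + 1) => M 0 (rshift d ord0)) wq.
  rewrite summxE mxE => h; rewrite -[X in _ = X]h.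
  by apply: eq_bigr => i _; rewrite mxE lift_last.
pose W := w ord_max.
pose mu := fun i : 'I_(d.+1) => w (widen_ord (leqnSn _) i).
have s1 : \sum_(i < d.+1) mu i = - W.
  by apply/eqP; rewrite -addr_eq0; apply/eqP; rewrite -[X in _ = X]ws [X in _ = X]sum_recr.
have s2 : \sum_(i < d.+1) mu i *: r i = - W *: vs.
  apply/eqP; rewrite scaleNr -addr_eq0 -[X in _ == X]low [X in _ == X]sum_recr.
  rewrite /pt ext_max; apply/eqP; congr (_ + _); apply: eq_bigr => i _.
  by rewrite ext_widen.
have s3 : \sum_(i < d.+1) mu i * dotp (r i) (r i) = - W * dotp vs vs.
  apply/eqP; rewrite mulNr -addr_eq0 -[X in _ == X]top [X in _ == X]sum_recr.
  rewrite /pt ext_max; apply/eqP; congr (_ + _); apply: eq_bigr => i _.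
  by rewrite ext_widen.
have wmu : forall i, w i = if unlift ord_max i is Some j then mu j else W.
  move=> i; case: (unliftP ord_max i) => [j ->|-> //].
  by rewrite lift_max_widen.
have [W0|W0] := eqVneq W 0.
  have mu0 : forall i, mu i = 0.
    apply: Hr; first by rewrite s1 W0 oppr0.
    by rewrite s2 W0 oppr0 scale0r.
  move=> i; rewrite wmu; case: (unlift _ _) => [j|] //; exact: mu0.
exfalso.
set rho := dotp (r ord0 - c) (r ord0 - c).
have sph : dotp (vs - c) (vs - c) = rho.
  have e1 : \sum_(i < d.+1) mu i * dotp (r i - c) (r i - c) = - W * rho.
    under eq_bigr do rewrite hc.
    by rewrite -mulr_suml s1.
  have e2 : \sum_(i < d.+1) mu i * dotp (r i - c) (r i - c) =
            - W * dotp (vs - c) (vs - c).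
    under eq_bigr do rewrite dotp_sqB.
    rewrite sum3 s3 s1.
    rewrite (eq_bigr (fun i => mu i * dotp c (r i))); last by [].
    rewrite -dotp_comb s2 dotpZr dotp_sqB; ring.
  have nW : - W != 0 by rewrite oppr_eq0.
  by apply: (mulfI nW); rewrite -e2 e1.
have rho0 : 0 <= rho by apply: dotp_ge0.
have rhop : 0 < rho.
  rewrite lt_def rho0 andbT; apply/eqP => r0.
  have e0 : r ord0 = c by apply/eqP; rewrite -subr_eq0; apply/eqP/dotp_eq0.
  have em : r ord_max = c.
    by apply/eqP; rewrite -subr_eq0; apply/eqP/dotp_eq0; rewrite hc.
  have : (ord0 : 'I_(d.+1)) = ord_max by apply: ri; rewrite e0 em.
  by move/(congr1 val) => /= h; rewrite -h in d1.
apply: (gen pt pti ptV); exists c, (Num.sqrt rho); split.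
  by rewrite sqrtr_gt0.
move=> i; rewrite sqr_sqrtr //.
rewrite /pt /ext; case: (unliftP ord_max i) => [j _|_]; [exact: hc | exact: sph].
Qed.


Lemma face_conv (R : realType) d (V : seq 'rV[R]_d) (A : 'rV[R]_(d + 1)) b :
  (forall x, lifting V x -> dotp A x <= b) ->
  [set x | lifting V x /\ dotp A x = b] =
  conv [set y | exists v, v \in [seq v <- V | dotp A (liftmap v) == b] /\ y = liftmap v].
Proof.
move=> Ale; apply/seteqP; split => x /=.
- case=> [[k [p [w [Sp [w0 [ws xE]]]]]] Ax].
  have le i : dotp A (p i) <= b by apply: Ale; apply: conv_gen; apply: Sp.
  have tight : forall i, w i != 0 -> dotp A (p i) = b.
    have S0 : \sum_(i < k) w i * (b - dotp A (p i)) = 0.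
      rewrite (eq_bigr (fun i => w i * b - w i * dotp A (p i))); last by move=> i _; rewrite mulrBr.
      by rewrite sumrB -mulr_suml ws mul1r -dotp_comb -xE Ax subrr.
    have pos : forall j, true -> 0 <= w j * (b - dotp A (p j)).
      by move=> j _; apply: mulr_ge0 => //; rewrite subr_ge0.
    move=> i wi; have /eqP := (psumr_eq0P pos S0 (i := i) isT).
    by rewrite mulf_eq0 (negbTE wi) /= subr_eq0 => /eqP.
  have [j0 wj0] : exists j, w j != 0.
    case: (boolP [exists j, w j != 0]) => [/existsP [j hj]|/existsPn h]; first by exists j.
    exfalso; move: ws; rewrite big1 => [/eqP|j _]; first by rewrite eq_sym oner_eq0.
    by apply/eqP; rewrite -[_ == _]negbK h.
  pose p' := fun i => if dotp A (p i) == b then p i else p j0.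
  exists k, p', w; split; last split => //; last split => //.
    move=> i; rewrite /p'; case: ifP => hi.
      by case: (Sp i) => v [vV pv]; exists v; rewrite mem_filter vV -pv hi.
    case: (Sp j0) => v [vV pv]; exists v; rewrite mem_filter vV -pv tight //.
    by rewrite eqxx.
  rewrite xE; apply: eq_bigr => i _; rewrite /p'; case: ifP => // /negbT hi.
  have -> : w i = 0 by apply/eqP; apply: contraR hi => /tight ->.
  by rewrite !scale0r.
- move=> hx; split.
    apply: conv_mono hx => y [v [vS ->]]; exists v; split => //.
    by move: vS; rewrite mem_filter => /andP[].
  apply: aff_dotp (conv_aff hx) => y [v [vS ->]].
  by move: vS; rewrite mem_filter => /andP[/eqP].
Qed.

Definition Fm (R : realType) d (V : seq 'rV[R]_d) (m : (size V).-tuple bool) :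
  set 'rV[R]_(d + 1) := conv [set y | exists v, v \in mask m V /\ y = liftmap v].
Arguments Fm [R d] V m.

Lemma lifting_facet_mask (R : realType) d (V : seq 'rV[R]_d) F :
  facet (lifting V) F -> exists m, F = Fm V m.
Proof.
case=> [[A [b [A0 [Ale ->]]]] _].
pose f := fun v => dotp A (liftmap v) == b.
have sz : size (map f V) == size V by rewrite size_map.
exists (Tuple sz); rewrite face_conv // /Fm /= -filter_mask //.
Qed.

Lemma lift_proj (R : realType) d (V : seq 'rV[R]_d) x :
  lifting V x -> conv [set v | v \in V] (lsubmx x).
Proof.
case=> k [p [w [Sp [w0 [ws ->]]]]].
exists k, (fun i => lsubmx (p i)), w; split.
  by move=> i; case: (Sp i) => v [vV ->]; rewrite lsubmx_lift.
split => //; split => //.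
by rewrite linear_sum; apply: eq_bigr => i _; rewrite linearZ.
Qed.

Lemma rank_drop (R : realType) m d (D : 'M[R]_(m, d + 1)) :
  (\rank D <= (\rank (lsubmx D)).+1)%N.
Proof.
have e : D = row_mx (lsubmx D) 0 + row_mx 0 (rsubmx D).
  by rewrite add_row_mx addr0 add0r hsubmxK.
have sD : (D <= (row_mx (lsubmx D) 0 + row_mx 0 (rsubmx D))%MS)%MS.
  by rewrite {1}e; apply: addmx_sub_adds; apply: submx_refl.
apply: (leq_trans (mxrankS sD)).
apply: (leq_trans (mxrank_adds_leqif _ _).1).
rewrite rank_row_mx0 rank_row_0mx -[(\rank (lsubmx D)).+1]addn1 leq_add2l.
exact: rank_leq_col.
Qed.

Lemma diffmx_lsub (R : realType) d j (q : 'I_j.+1 -> 'rV[R]_(d + 1)) :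
  lsubmx (diffmx q) = diffmx (fun i => lsubmx (q i)).
Proof. by apply/matrixP => i k; rewrite !mxE. Qed.

Lemma no_vertical (R : realType) d (V : seq 'rV[R]_d) (A : 'rV[R]_(d + 1)) b
    (q : 'I_(d.+1) -> 'rV[R]_(d + 1)) :
  (1 <= d)%N -> is_vertex_set V -> simplicial V -> A != 0 ->
  (forall x, lifting V x -> dotp A x <= b) ->
  aff_indep q -> (forall i, lifting V (q i) /\ dotp A (q i) = b) ->
  A 0 (rshift d ord0) = 0 -> False.
Proof.
move=> d1 hV simp A0 Ale Hq Fq Al.
set A' := lsubmx A.
have A'0 : A' != 0.
  apply: contraNneq A0 => hA; rewrite -(hsubmxK A) -/A' hA.
  have -> : rsubmx A = 0 by apply/rowP => i; rewrite ord1 !mxE Al.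
  by rewrite row_mx0.
have dl v : dotp A (liftmap v) = dotp A' v by rewrite dotp_lift Al mul0r addr0.
have dx x : dotp A x = dotp A' (lsubmx x) by rewrite dotp_split Al mul0r addr0.
set S := [seq v <- V | dotp A (liftmap v) == b].
set FP := [set x | conv [set v | v \in V] x /\ dotp A' x = b].
have [uV [_ dimP]] := hV.
have hFP : facet (conv [set v | v \in V]) FP.
  split.
    exists A', b; split => //; split => // x; apply: conv_dotp_le => v vV.
    rewrite -dl; apply: Ale; apply: conv_gen; by exists v.
  exists d.-1; rewrite prednK //; split => //; split; last first.
    case=> p [Sp Hp]; have := affindep_hyper A'0 Hp (fun i => (Sp i).2).
    by rewrite prednK // ltnn.
  pose q' := fun i => lsubmx (q i).
  have rk : (d.-1.+1 <= (\rank (diffmx q')).+1)%N.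
    rewrite prednK //.
    have := rank_drop (diffmx q); rewrite affindep_rank_diff // diffmx_lsub.
    by move=> h; apply: (leq_trans _ h).
  have [r [Hr Er]] := affindep_extract rk.
  exists r; split => // i; case: (Er i) => l ->; split.
    by apply: lift_proj; case: (Fq l).
  by rewrite -dx; case: (Fq l).
have sS : (size S <= d)%N.
  pose ps := fun i : 'I_(size S) => nth 0 S i.
  have psi : injective ps.
    move=> i j /eqP; rewrite /ps nth_uniq ?ltn_ord //; first by move/eqP/val_inj.
    by rewrite filter_uniq.
  have psS i : ps i \in S by rewrite /ps mem_nth.
  have H := simp _ hFP _ ps psi.
  have Hps : aff_indep ps.
    apply: H => i; move: (psS i); rewrite mem_filter => /andP[/eqP hb vV]; split => //.
    split; first by apply: conv_gen.
    by rewrite -dl.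
  by apply: (affindep_hyper (b := b) A'0 Hps) => i; move: (psS i); rewrite mem_filter => /andP[/eqP hb _]; rewrite -dl.
have FS := face_conv Ale.
have qS i : conv [set y | exists v, v \in S /\ y = liftmap v] (q i).
  by rewrite -/S -FS; apply: Fq.
have Sne : (0 < size S)%N.
  case: (qS ord0) => k [p [w [Sp [_ [ws _]]]]].
  case: k p w Sp ws => [|k] p w Sp ws.
    by move: ws; rewrite big_ord0 => /eqP; rewrite eq_sym oner_eq0.
  by case: (Sp ord0) => v [vS _]; case: (S) vS.
set j := (size S).-1; have sj : size S = j.+1 by rewrite prednK.
pose ls : 'I_j.+1 -> 'rV[R]_(d + 1) := fun i => liftmap (nth 0 S i).
have sub : forall y, [set y | exists v, v \in S /\ y = liftmap v] y -> (y - ls ord0 <= diffmx ls)%MS.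
  move=> y [v [vS ->]]; have iv : (index v S < j.+1)%N by rewrite -sj index_mem.
  have -> : liftmap v = ls (Ordinal iv) by rewrite /ls /= nth_index.
  exact: diff_sub.
have := affindep_rank Hq (fun i => aff_span_sub sub (conv_aff (qS i))).
have := rank_leq_row (diffmx ls); rewrite ltnS => h1 h2.
have := leq_trans h2 h1; rewrite -ltnS -sj => h3.
by have := leq_trans h3 sS; rewrite ltnn.
Qed.

Lemma lifting_facet_nf (R : realType) d (V : seq 'rV[R]_d) F :
  (1 <= d)%N -> is_vertex_set V -> simplicial V -> generic V ->
  facet (lifting V) F ->
  exists (N : 'rV[R]_(d + 1)) (e : R), N 0 (rshift d ord0) = -1 /\
    aff F = [set x | dotp N x = - e] /\ lin_part (aff F) = [set x | dotp N x = 0].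
Proof.
move=> d1 hV simp gen [[A [b [A0 [Ale FE]]]] [k [dimL dimF]]].
have [p [Hp Lp]] := lifting_full d1 hV gen.
have kd : k.+1 = (d + 1)%N by apply: (dim_eq dimL Hp Lp); rewrite addn1.
have kd' : k = d by move: kd; rewrite addn1 => -[].
subst k.
case: dimF => -[q [Fq Hq]] _.
have Fq' i : lifting V (q i) /\ dotp A (q i) = b by move: (Fq i); rewrite FE.
have Al : A 0 (rshift d ord0) != 0.
  by apply/eqP => Al; apply: (no_vertical d1 hV simp A0 Ale Hq Fq' Al).
set al := A 0 (rshift d ord0).
pose N := (- al^-1) *: A.
exists N, (b / al); split.
  by rewrite /N mxE mulNr mulVf.
have N0 : N != 0.
  by rewrite /N scaler_eq0 negb_or oppr_eq0 invr_eq0 Al.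
apply: (linpart_aff (q := q) N0 _ Hq Fq (esym (addn1 d))).
move=> x; rewrite FE => -[_ hx]; rewrite /N dotpZl hx.
by rewrite mulNr mulrC.
Qed.


Definition nfspec (R : realType) d (F : set 'rV[R]_(d + 1)) (N : 'rV[R]_(d + 1)) (e : R) :=
  N 0 (rshift d ord0) = -1 /\ aff F = [set x | dotp N x = - e] /\
  lin_part (aff F) = [set x | dotp N x = 0].

Lemma dotp_delta (R : realType) n (N : 'rV[R]_n) i : dotp N (delta_mx 0 i) = N 0 i.
Proof.
rewrite /dotp (bigD1 i) //= big1 => [|j ji]; first by rewrite !mxE !eqxx mulr1 addr0.
by rewrite !mxE (negbTE ji) andbF mulr0.
Qed.

Lemma affindep_delta (R : realType) n : aff_indep (fun i : 'I_n => delta_mx 0 i : 'rV[R]_n).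
Proof.
move=> w _ wq i.
have := congr1 (fun M : 'rV[R]_n => M 0 i) wq; rewrite summxE mxE => <-.
rewrite (bigD1 i) //= big1 => [|j ji]; first by rewrite !mxE !eqxx mulr1 addr0.
by rewrite !mxE eq_sym (negbTE ji) andbF mulr0.
Qed.

Lemma sum_nonpos_eq0 (R : realType) k (f : 'I_k -> R) :
  (forall i, f i <= 0) -> \sum_(i < k) f i = 0 -> forall i, f i = 0.
Proof.
move=> h s i.
have pos : forall j, true -> 0 <= - f j by move=> j _; rewrite oppr_ge0.
have s' : \sum_(j < k) - f j = 0 by rewrite sumrN s oppr0.
by have /eqP := psumr_eq0P pos s' (i := i) isT; rewrite oppr_eq0 => /eqP.
Qed.

Lemma norm_le_sum (R : realType) n (N : 'rV[R]_n) i : N 0 i <= \sum_j `|N 0 j|.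
Proof.
rewrite (bigD1 i) //=; apply: ler_wpDr; first by apply: sumr_ge0.
exact: ler_norm.
Qed.


Theorem mainTheorem6 (R : realType) (d : nat) (V : seq 'rV[R]_d) :
  (2 <= d)%N ->
  is_vertex_set V -> simplicial V -> generic V ->
  forall E : set 'rV[R]_(d + 1), facet (Tplus V) E ->
  exists G : set 'rV[R]_(d + 1),
    facet (Pplus V) G /\ ~ bounded_set G /\
    lin_part (aff G) = lin_part (aff E).
Proof.
move=> d2 hV simp gen E hE.
have d1 : (1 <= d)%N by apply: ltnW.
pose Pm := fun m : (size V).-tuple bool => facet (lifting V) (Fm V m).
have NE : forall m, exists Ne : 'rV[R]_(d + 1) * R, Pm m -> nfspec (Fm V m) Ne.1 Ne.2.
  move=> m; case: (pselect (Pm m)) => hm; last by exists (0, 0).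
  have [N [e [h1 [h2 h3]]]] := lifting_facet_nf d1 hV simp gen hm.
  by exists (N, e) => _; split.
pose Nm := fun m => (projT1 (cid (NE m))).1.
pose em := fun m => (projT1 (cid (NE m))).2.
have spec : forall m, Pm m -> nfspec (Fm V m) (Nm m) (em m).
  by move=> m; apply: (projT2 (cid (NE m))).
have Pchar : forall x, Pplus V x <-> forall m, Pm m -> dotp (Nm m) x <= - em m.
  move=> x; split.
    move=> H m hm; have [s1 [s2 s3]] := spec m hm.
    by rewrite -uh_char // -s2; apply: H.
  move=> H F hF; have [m Fm_] := lifting_facet_mask hF.
  have hm : Pm m by rewrite /Pm -Fm_.
  have [s1 [s2 s3]] := spec m hm.
  by rewrite Fm_ s2 uh_char //; apply: H.
have Tchar : forall x, Tplus V x <-> forall m, Pm m -> dotp (Nm m) x <= 0.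
  move=> x; split.
    move=> H m hm; have [s1 [s2 s3]] := spec m hm.
    by rewrite -uh_char // -s3; apply: H.
  move=> H F hF; have [m Fm_] := lifting_facet_mask hF.
  have hm : Pm m by rewrite /Pm -Fm_.
  have [s1 [s2 s3]] := spec m hm.
  by rewrite Fm_ s3 uh_char //; apply: H.
have Nlast : forall m, Pm m -> Nm m 0 (rshift d ord0) = -1.
  by move=> m hm; case: (spec m hm).
pose el : 'rV[R]_(d + 1) := delta_mx 0 (rshift d ord0).
have Nel : forall m, Pm m -> dotp (Nm m) el = -1.
  by move=> m hm; rewrite /el dotp_delta Nlast.
have [t [t0 ht]] := @fin_bound R _ Pm (fun=> 1) (fun m => \sum_j `|Nm m 0 j|)
   (fun _ _ => ltr01).
pose tq := fun i : 'I_(d + 1) => t *: el + delta_mx 0 i.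
pose ones : 'rV[R]_(d + 1) := const_mx 1.
have ones_delta : forall i : 'I_(d + 1), dotp ones (delta_mx 0 i) = 1.
  by move=> i; rewrite dotp_delta mxE.
have Htq : aff_indep (ext tq (t *: el)).
  apply: (affindep_ext (N := ones) (b := t + 1)).
  - exact: (affindep_trans (x := t *: el) (@affindep_delta R _)).
  - by move=> i; rewrite /tq dotpDr dotpZr /el !ones_delta mulr1.
  - rewrite dotpZr /el ones_delta mulr1; apply/eqP => h.
    by move: h => /eqP; rewrite -subr_eq0 opprD addrA subrr sub0r oppr_eq0 oner_eq0.
have Ttq : forall i, Tplus V (ext tq (t *: el) i).
  move=> i; apply/Tchar => m hm; rewrite /ext; case: (unlift _ _) => [j|].
    rewrite /tq dotpDr dotpZr Nel // dotp_delta mulrN1.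
    have := ht m hm; rewrite mulr1 => h; have := norm_le_sum (Nm m) j.
    move=> h'; lra.
  by rewrite dotpZr Nel // mulrN1 oppr_le0 ltW.
case: hE => [[a [b [a0 [Tle EE]]]] [k [dimT dimE]]].
have kd : k.+1 = (d + 1)%N by apply: (dim_eq dimT Htq Ttq).
have kd' : k = d by move: kd; rewrite addn1 => -[].
subst k.
case: dimE => -[q [Eq Hq]] _.
have ET : forall x, E x -> Tplus V x by move=> x; rewrite EE => -[].
have Ea : forall x, E x -> dotp a x = b by move=> x; rewrite EE => -[].
have b0 : b = 0.
  have T0 : Tplus V 0 by apply/Tchar => m _; rewrite dotp0r.
  have := Tle _ T0; rewrite dotp0r => hb.
  have T2 : Tplus V (2%:R *: q ord0).
    apply/Tchar => m hm; rewrite dotpZr; apply: mulr_ge0_le0 => //.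
    by move/Tchar: (ET _ (Eq ord0)); apply.
  have := Tle _ T2; rewrite dotpZr Ea //; lra.
subst b.
have Econe : forall x s, E x -> 0 <= s -> E (s *: x).
  move=> x s Ex s0; rewrite EE; split.
    apply/Tchar => m hm; rewrite dotpZr; apply: mulr_ge0_le0 => //.
    by move/Tchar: (ET _ Ex); apply.
  by rewrite dotpZr Ea // mulr0.
pose c := \sum_(i < d.+1) q i.
have ac : dotp a c = 0.
  by rewrite dotp_sumr big1 // => i _; apply: Ea.
have Nc_le : forall m, Pm m -> dotp (Nm m) c <= 0.
  move=> m hm; rewrite dotp_sumr; apply: sumr_le0 => i _.
  by move/Tchar: (ET _ (Eq i)); apply.
have aspan : forall v, dotp a v = 0 -> exists w : 'I_(d.+1) -> R,
    \sum_(i < d.+1) w i = 1 /\ v = \sum_(i < d.+1) w i *: q i.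
  move=> v hv; apply: (affindep_span a0 Hq (fun i => Ea _ (Eq i)) (esym (addn1 d)) hv).
have par : forall m, Pm m -> dotp (Nm m) c = 0 ->
    Nm m = (dotp (Nm m) a / dotp a a) *: a.
  move=> m hm hc; apply: perp_parallel => // v hv.
  have Nq : forall i, dotp (Nm m) (q i) = 0.
    apply: sum_nonpos_eq0; last by rewrite -dotp_sumr.
    by move=> i; move/Tchar: (ET _ (Eq i)); apply.
  have [w [_ ->]] := aspan v hv.
  by rewrite dotp_comb big1 // => i _; rewrite Nq mulr0.
have [m0 [Pm0 Nc0]] : exists m0, Pm m0 /\ dotp (Nm m0) c = 0.
  case: (pselect (exists m0, Pm m0 /\ dotp (Nm m0) c = 0)) => // hno; exfalso.
  have neg : forall m, Pm m -> 0 < - dotp (Nm m) c.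
    move=> m hm; rewrite oppr_gt0 lt_def Nc_le // andbT.
    by apply/eqP => h; apply: hno; exists m.
  have [s [s0 hs]] := @fin_bound R _ _ _ (fun m => dotp (Nm m) a) neg.
  have Ty : Tplus V (c + s^-1 *: a).
    apply/Tchar => m hm; rewrite dotpDr dotpZr.
    have := hs m hm; have := neg m hm => h1 h2.
    have si : 0 < s^-1 by rewrite invr_gt0.
    have : s^-1 * dotp (Nm m) a <= - dotp (Nm m) c.
      by rewrite -(ler_pM2l s0) mulrA mulfV ?gt_eqF // mul1r.
    lra.
  have := Tle _ Ty; rewrite dotpDr dotpZr ac add0r.
  have := dotp_gt0 a0; have si : 0 < s^-1 by rewrite invr_gt0.
  move=> h1 h2; have : 0 < s^-1 * dotp a a by apply: mulr_gt0.
  lra.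
set N := Nm m0.
set lam := dotp N a / dotp a a.
have Na : N = lam *: a := par m0 Pm0 Nc0.
have NlastN : N 0 (rshift d ord0) = -1 := Nlast m0 Pm0.
have alast : lam * a 0 (rshift d ord0) = -1.
  by rewrite -NlastN Na mxE.
have lam0 : lam != 0 by apply/eqP => l0; move: alast; rewrite l0 mul0r => /eqP; rewrite eq_sym oppr_eq0 oner_eq0.
have NE0 : forall v, E v -> dotp N v = 0 by move=> v Ev; rewrite Na dotpZl Ea // mulr0.
have alt : forall m, Pm m -> Nm m = N \/ dotp (Nm m) c < 0.
  move=> m hm; case: (ltP (dotp (Nm m) c) 0) => h; first by right.
  left; have hc : dotp (Nm m) c = 0 by apply/eqP; rewrite eq_le Nc_le // h.
  have e1 := par m hm hc.
  set lam' := dotp (Nm m) a / dotp a a in e1.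
  have e2 : lam' * a 0 (rshift d ord0) = -1 by rewrite -(Nlast m hm) e1 mxE.
  have : lam' = lam.
    have al0 : a 0 (rshift d ord0) != 0.
      by apply/eqP => h0; move: alast; rewrite h0 mulr0 => /eqP; rewrite eq_sym oppr_eq0 oner_eq0.
    by apply: (mulIf al0); rewrite e2 alast.
  by move=> ll; rewrite e1 Na ll.
have [ms [[Pms Nms] hms]] := fin_argmax (P := fun m => Pm m /\ Nm m = N) em (conj Pm0 erefl).
set es := em ms.
have NN0 : dotp N N != 0.
  rewrite gt_eqF // dotp_gt0 //; apply/eqP => h0; move: NlastN; rewrite h0 mxE => /eqP.
  by rewrite eq_sym oppr_eq0 oner_eq0.
pose y0 := (- es / dotp N N) *: N.
have Ny0 : dotp N y0 = - es by rewrite dotpZr -mulrA mulVf // mulr1.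
have neg2 : forall m, Pm m /\ Nm m != N -> 0 < - dotp (Nm m) c.
  move=> m [hm hN]; rewrite oppr_gt0; case: (alt m hm) => // h.
  by rewrite h eqxx in hN.
have [t2 [t20 ht2]] := @fin_bound R _ _ _ (fun m => em m + dotp (Nm m) y0) neg2.
pose x0 := y0 + t2 *: c.
have Nc : dotp N c = 0 by rewrite Na dotpZl ac mulr0.
have Px0 : Pplus V x0.
  apply/Pchar => m hm; rewrite /x0 dotpDr [dotp _ (t2 *: c)]dotpZr.
  case: (eqVneq (Nm m) N) => hN.
    rewrite hN Ny0 Nc mulr0 addr0 lerN2.
    by apply: hms; split.
  have := ht2 m (conj hm hN) => /= h; lra.
pose G := [set x | Pplus V x /\ dotp N x = - es].
have Gx0 : G x0 by split => //; rewrite /x0 dotpDr [dotp _ (t2 *: c)]dotpZr Nc mulr0 addr0.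
have Gshift : forall x p, G x -> E p -> G (x + p).
  move=> x p [Px Nx] Ep; split; last by rewrite dotpDr Nx NE0 // addr0.
  apply/Pchar => m hm; rewrite dotpDr.
  have := (Pchar x).1 Px m hm; have : dotp (Nm m) p <= 0.
    by move/Tchar: (ET _ Ep); apply.
  lra.
have N0 : N != 0.
  by apply/eqP => h0; move: NlastN; rewrite h0 mxE => /eqP; rewrite eq_sym oppr_eq0 oner_eq0.
pose gq := fun i => x0 + q i.
have Hgq : aff_indep gq by apply: affindep_trans.
have Ggq : forall i, G (gq i) by move=> i; apply: Gshift => //; apply: Eq.
exists G; split; last split.
- split.
    exists N, (- es); split => //; split => //.
    move=> x Px; have := (Pchar x).1 Px ms Pms; rewrite Nms //.
  exists d; split; last first.
    split; first by exists gq; split.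
    case=> p [Gp Hp]; have := affindep_hyper N0 Hp (fun i => (Gp i).2).
    by rewrite addn1 ltnn.
  split; last first.
    case=> p [_ Hp]; have := affindep_bound Hp; by rewrite addn1 ltnn.
  exists (ext gq (x0 + el)); split.
    move=> i; rewrite /ext; case: (unlift _ _) => [j|]; first by case: (Ggq j).
    apply/Pchar => m hm; rewrite dotpDr Nel //.
    have := (Pchar x0).1 Px0 m hm; lra.
  apply: (affindep_ext (N := N) (b := - es)) => //.
    by move=> i; case: (Ggq i).
  rewrite dotpDr /el dotp_delta NlastN.
  case: Gx0 => _ ->; apply/eqP => h; lra.
- case=> M hM.
  have [p [Ep p0]] : exists p, E p /\ p != 0.
    case: (eqVneq (q ord0) 0) => h0; last by exists (q ord0); split.
    exists (q ord_max); split => //; apply/eqP => h1.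
    have : (ord0 : 'I_d.+1) = ord_max by apply: (affindep_inj Hq); rewrite h0 h1.
    move/(congr1 val) => /= h; by rewrite -h in d1.
  have [j pj] : exists j, p 0 j != 0.
    case: (boolP [exists j, p 0 j != 0]) => [/existsP [j hj]|/existsPn h]; first by exists j.
    exfalso; move/eqP: p0; apply; apply/rowP => j; rewrite mxE.
    by apply/eqP; move: (h j); rewrite negbK.
  have Gs : forall s, 0 <= s -> G (x0 + s *: p).
    by move=> s s0; apply: Gshift => //; apply: Econe.
  have M0 : `|x0 0 j| <= M by apply: hM.
  have pj0 : 0 < `|p 0 j| by rewrite normr_gt0.
  pose s := (M + `|x0 0 j| + 1) / `|p 0 j|.
  have s0 : 0 <= s.
    apply: divr_ge0; last exact: ltW.
    have := normr_ge0 (x0 0 j); lra.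
  have hb : `|x0 0 j + s * p 0 j| <= M.
    have := hM _ (Gs s s0) j.
    by have -> : (x0 + s *: p) 0 j = x0 0 j + s * p 0 j by rewrite !mxE.
  have sp : `|s * p 0 j| = M + `|x0 0 j| + 1.
    by rewrite normrM (ger0_norm s0) /s divfK ?gt_eqF.
  have tri := ler_normB (x0 0 j + s * p 0 j) (x0 0 j).
  move: tri; rewrite addrC addKr sp => tri.
  have := normr_ge0 (x0 0 j); lra.
- have [_ linE] := linpart_aff a0 Ea Hq Eq (esym (addn1 d)).
  have [_ linG] := linpart_aff N0 (fun x (Gx : G x) => Gx.2) Hgq Ggq (esym (addn1 d)).
  rewrite linG linE; apply/seteqP; split => v /=; rewrite Na dotpZl.
    by move/eqP; rewrite mulf_eq0 (negbTE lam0) /= => /eqP.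
  by move->; rewrite mulr0.
Qed.
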